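(* Assume $n^{2/3}$ is an integer. Consider Algorithm ProxSVRG (described in the context) with $b=n^{2/3}$, $\eta=1/(3L)$, $m=\lfloor n^{1/3}\rfloor$, and $T$ a multiple of $m$. Then the output $x_a$ satisfies $$\mathbb E\big[\|\mathcal G_\eta(x_a)\|^2\big]\le \frac{18L\,(F(x^0)-F(x^* ))}{T},$$ where $x^*$ is an optimal solution of $\min_x F(x)$.
   Context: Setting: Let $n,d\ge 1$ be integers and $[n]=\{1,\dots,n\}$. Let $f_1,\dots,f_n:\mathbb R^d\to\mathbb R$ be differentiable (possibly nonconvex) functions, each $L$-smooth for some $L>0$, i.e. $\|\nabla f_i(x)-\nabla f_i(y)\|\le L\|x-y\|$ for all $x,y\in\mathbb R^d$ and $i\in[n]$. Let $f=\frac1n\sum_{i=1}^n f_i$. Let $h:\mathbb R^d\to\mathbb R\cup\{+\infty\}$ be proper, lower semicontinuous and convex, with closed domain. Let $F=f+h$, and let $x^*$ be a global minimizer of $F$ on $\mathbb R^d$ (assumed to exist). For $\eta>0$, $\mathrm{prox}_{\eta h}(x):=\arg\min_{y\in\mathbb R^d}\big(h(y)+\frac1{2\eta}\|y-x\|^2\big)$, and the gradient mapping is $\mathcal G_\eta(x):=\frac1\eta\big[x-\mathrm{prox}_{\eta h}(x-\eta\nabla f(x))\big]$. Algorithm ProxSVRG$(x^0,T,m,b,\eta)$: Given $x^0\in\mathbb R^d$, positive integers $T,m,b$ and $\eta>0$, let $S=\lceil T/m\rceil$ and set $\tilde x^0=x^0_m=x^0$. For $s=0,\dots,S-1$: set $x^{s+1}_0=x^s_m$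 and $g^{s+1}=\frac1n\sum_{i=1}^n\nabla f_i(\tilde x^s)$; for $t=0,\dots,m-1$: draw a multiset $I_t$ of $b$ indices, each drawn independently and uniformly at random from $[n]$ (with replacement, independently of all previous draws), set $v^{s+1}_t=\frac1b\sum_{i\in I_t}\big(\nabla f_i(x^{s+1}_t)-\nabla f_i(\tilde x^s)\big)+g^{s+1}$ and $x^{s+1}_{t+1}=\mathrm{prox}_{\eta h}(x^{s+1}_t-\eta v^{s+1}_t)$; after the inner loop set $\tilde x^{s+1}=x^{s+1}_m$. The output $x_a$ is chosen uniformly at random from $\{x^{s+1}_t: 0\le t\le m-1,\ 0\le s\le S-1\}$. Expectations are over all randomness of the algorithm. *)

(* Defs.v *)
From Stdlib Require Import Reals ClassicalEpsilon.
From mathcomp Require Import all_boot.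
Set Implicit Arguments. Unset Strict Implicit. Unset Printing Implicit Defensive.

Open Scope R_scope.

Notation "\rsum_ ( i < n ) F" := (\big[Rplus/R0]_(i < n) F)
  (at level 41, F at level 41, i, n at level 50).
Notation "\rsum_ ( i : T ) F" := (\big[Rplus/R0]_(i : T) F)
  (at level 41, F at level 41, i at level 50).

Definition vec (d : nat) := 'I_d -> R.
Definition vadd {d} (x y : vec d) : vec d := fun k => x k + y k.
Definition vsub {d} (x y : vec d) : vec d := fun k => x k - y k.
Definition vscale {d} (c : R) (x : vec d) : vec d := fun k => c * x k.
Definition dot {d} (x y : vec d) : R := \rsum_(k < d) (x k * y k).
Definition norm2 {d} (x : vec d) : R := dot x x.
Definition norm {d} (x : vec d) : R := sqrt (norm2 x).

Definition has_gradient {d} (g : vec d -> R) (gr : vec d -> vec d) : Prop :=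
  forall x eps, 0 < eps -> exists delta, 0 < delta /\
    forall hv, norm hv < delta ->
      Rabs (g (vadd x hv) - g x - dot (gr x) hv) <= eps * norm hv.

Definition smooth {d} (L : R) (gr : vec d -> vec d) : Prop :=
  forall x y, norm (vsub (gr x) (gr y)) <= L * norm (vsub x y).

(* Extended reals R ∪ {+oo}: None = +oo. *)
Definition ext := option R.
Definition ext_le (a b : ext) : Prop :=
  match a, b with
  | _, None => True
  | None, Some _ => False
  | Some x, Some y => x <= y
  end.
Definition ext_add_r (a : ext) (r : R) : ext :=
  match a with None => None | Some x => Some (x + r) end.
Definition lt_ext (a : R) (o : ext) : Prop :=
  match o with None => True | Some v => a < v end.

Definition proper_fn {d} (h : vec d -> ext) : Prop := exists x, h x <> None.
Definition lsc {d} (h : vec d -> ext) : Prop :=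
  forall x a, lt_ext a (h x) -> exists delta, 0 < delta /\
    forall y, norm (vsub y x) < delta -> lt_ext a (h y).
Definition convex_ext {d} (h : vec d -> ext) : Prop :=
  forall x y hx hy t, h x = Some hx -> h y = Some hy -> 0 <= t <= 1 ->
    exists v, h (vadd (vscale t x) (vscale (1 - t) y)) = Some v /\
              v <= t * hx + (1 - t) * hy.
Definition closed_dom {d} (h : vec d -> ext) : Prop :=
  forall x, (forall eps, 0 < eps -> exists y, h y <> None /\ norm (vsub y x) < eps) ->
    h x <> None.

Definition is_prox {d} (h : vec d -> ext) (eta : R) (x y : vec d) : Prop :=
  forall z, ext_le (ext_add_r (h y) (norm2 (vsub y x) / (2 * eta)))
                   (ext_add_r (h z) (norm2 (vsub z x) / (2 * eta))).
Definition prox {d} (h : vec d -> ext) (eta : R) (x : vec d) : vec d :=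
  epsilon (inhabits (fun _ : 'I_d => 0)) (is_prox h eta x).

(* f = (1/n) sum_i f_i (components indexed 0..n-1) and its gradient. *)
Definition favg {d} (n : nat) (fs : nat -> vec d -> R) (x : vec d) : R :=
  / INR n * \rsum_(i < n) fs i x.
Definition gavg {d} (n : nat) (gs : nat -> vec d -> vec d) (x : vec d) : vec d :=
  fun k => / INR n * \rsum_(i < n) gs i x k.

Definition Fobj {d} (n : nat) (fs : nat -> vec d -> R) (h : vec d -> ext) (x : vec d) : ext :=
  ext_add_r (h x) (favg n fs x).

Definition grad_map {d} (n : nat) (gs : nat -> vec d -> vec d) (h : vec d -> ext)
  (eta : R) (x : vec d) : vec d :=
  vscale (/ eta) (vsub x (prox h eta (vsub x (vscale eta (gavg n gs x))))).

(* ---------------- ProxSVRG ----------------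
   idx s t j = the j-th index (0-based, in [0,n)) of the minibatch I_t in epoch s. *)
Definition vr_grad {d} (gs : nat -> vec d -> vec d) (b : nat) (It : nat -> nat)
  (x snap g : vec d) : vec d :=
  fun k => (/ INR b * (\rsum_(j < b) (gs (It j) x k - gs (It j) snap k))) + g k.

(* Inner loop of epoch s: x^{s+1}_t, starting from x^{s+1}_0 = snap. *)
Fixpoint inner_iter {d} (n : nat) (gs : nat -> vec d -> vec d) (h : vec d -> ext)
  (eta : R) (b : nat) (It : nat -> nat -> nat) (snap : vec d) (t : nat) : vec d :=
  match t with
  | O => snap
  | S t' =>
      let x := inner_iter n gs h eta b It snap t' in
      prox h eta (vsub x (vscale eta (vr_grad gs b (It t') x snap (gavg n gs snap))))
  end.

(* Snapshots tilde x^s (tilde x^0 = x^0, tilde x^{s+1} = x^{s+1}_m);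
   note x^{s+1}_0 = x^s_m = tilde x^s. *)
Fixpoint snapshot {d} (n : nat) (gs : nat -> vec d -> vec d) (h : vec d -> ext)
  (eta : R) (b m : nat) (idx : nat -> nat -> nat -> nat) (x0 : vec d) (s : nat) : vec d :=
  match s with
  | O => x0
  | S s' => inner_iter n gs h eta b (idx s') (snapshot n gs h eta b m idx x0 s') m
  end.

Definition iterate {d} (n : nat) (gs : nat -> vec d -> vec d) (h : vec d -> ext)
  (eta : R) (b m : nat) (idx : nat -> nat -> nat -> nat) (x0 : vec d) (s t : nat) : vec d :=
  inner_iter n gs h eta b (idx s) (snapshot n gs h eta b m idx x0 s) t.

(* Sample space of all minibatch draws: for each epoch s < S, inner step t < m,
   and slot j < b, an index in [n]; each outcome has probability 1/#|Omega|
   (i.i.d. uniform draws with replacement). *)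
Definition Omega (n S m b : nat) : finType :=
  {ffun 'I_S -> {ffun 'I_m -> {ffun 'I_b -> 'I_n}}}.

Definition draws {n S m b : nat} (w : Omega n S m b) : nat -> nat -> nat -> nat :=
  fun s t j =>
    match (insub s : option 'I_S), (insub t : option 'I_m), (insub j : option 'I_b) with
    | Some s', Some t', Some j' => nat_of_ord (w s' t' j')
    | _, _, _ => 0%N
    end.

(* E ||G_eta(x_a)||^2, x_a uniform over {x^{s+1}_t : t < m, s < S},
   independent of the draws. *)
Definition expected_sq_grad_map {d} (n : nat) (gs : nat -> vec d -> vec d)
  (h : vec d -> ext) (eta : R) (x0 : vec d) (S m b : nat) : R :=
  / INR #|{: Omega n S m b}| *
  \rsum_(w : Omega n S m b)
    (/ INR (S * m) *
     \rsum_(s < S) \rsum_(t < m)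
        norm2 (grad_map n gs h eta (iterate n gs h eta b m (draws w) x0 s t))).

(* Main.v *)
Require Import Defs.
From Stdlib Require Import Reals.
From mathcomp Require Import all_boot.
Open Scope R_scope.
From Stdlib Require Import Lra Lia Psatz Classical ClassicalEpsilon FunctionalExtensionality.
From HB Require Import structures.
Set Warnings "-redundant-canonical-projection".
Set Implicit Arguments. Unset Strict Implicit. Unset Printing Implicit Defensive.

Lemma Rplus_0_l' : left_id R0 Rplus. Proof. move=> x; lra. Qed.
Lemma Rplus_assoc' : associative Rplus. Proof. move=> x y z; lra. Qed.
Lemma Rplus_comm' : commutative Rplus. Proof. move=> x y; lra. Qed.
HB.instance Definition _ := Monoid.isComLaw.Build R R0 Rplus Rplus_assoc' Rplus_comm' Rplus_0_l'.

Section Sums.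
Variable I : finType.

Lemma rsumD (F G : I -> R) : \rsum_(i : I) (F i + G i) = \rsum_(i : I) F i + \rsum_(i : I) G i.
Proof. exact: big_split. Qed.

Lemma rsumZ (c : R) (F : I -> R) : \rsum_(i : I) (c * F i) = c * \rsum_(i : I) F i.
Proof.
elim/big_rec2: _ => [|i y1 y2 _ ->]; lra.
Qed.

Lemma rsumN (F : I -> R) : \rsum_(i : I) (- F i) = - \rsum_(i : I) F i.
Proof. elim/big_rec2: _ => [|i y1 y2 _ ->]; lra. Qed.

Lemma rsumB (F G : I -> R) : \rsum_(i : I) (F i - G i) = \rsum_(i : I) F i - \rsum_(i : I) G i.
Proof. rewrite /Rminus rsumD rsumN //. Qed.

Lemma rsum_le (F G : I -> R) : (forall i, F i <= G i) -> \rsum_(i : I) F i <= \rsum_(i : I) G i.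
Proof. move=> H; elim/big_rec2: _ => [|i y1 y2 _ Hy]; [lra| have := H i; lra]. Qed.

Lemma rsum_ge0 (F : I -> R) : (forall i, 0 <= F i) -> 0 <= \rsum_(i : I) F i.
Proof. move=> H; elim/big_rec: _ => [|i y _ Hy]; [lra| have := H i; lra]. Qed.

Lemma rsum_const (c : R) : \rsum_(i : I) c = INR #|I| * c.
Proof.
rewrite cardE /enum_mem -big_filter /=.
elim: (filter _ _) => [|a s IH]; rewrite ?big_nil ?big_cons /=; first lra.
rewrite IH; set k := size _; simpl; fold k; case: k => [|k] /=; lra.
Qed.

Lemma rsum_exch (J : finType) (F : I -> J -> R) :
  \rsum_(i : I) \rsum_(j : J) F i j = \rsum_(j : J) \rsum_(i : I) F i j.
Proof. exact: exchange_big. Qed.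

Lemma rsum_term (F : I -> R) (i0 : I) : (forall i, 0 <= F i) -> F i0 <= \rsum_(i : I) F i.
Proof.
move=> H; rewrite (bigD1 i0) //=.
have : 0 <= \big[Rplus/R0]_(i | i != i0) F i.
  elim/big_rec: _ => [|i y _ Hy]; [lra| have := H i; lra].
lra.
Qed.
Lemma rsum_mulr (F : I -> R) c : (\rsum_(i : I) F i) * c = \rsum_(i : I) (F i * c).
Proof. rewrite Rmult_comm -rsumZ; apply: eq_bigr => i _; ring. Qed.
End Sums.

Section Vec.
Variable d : nat.
Implicit Types x y z u a b : vec d.

Lemma norm2_ge0 x : 0 <= norm2 x.
Proof. apply: rsum_ge0 => k; nra. Qed.

Lemma norm_ge0 x : 0 <= norm x.
Proof. exact: sqrt_pos. Qed.

Lemma norm_sq x : norm x * norm x = norm2 x.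
Proof. rewrite /norm sqrt_sqrt //; exact: norm2_ge0. Qed.

Lemma coord_le x k : x k * x k <= norm2 x.
Proof. rewrite /norm2 /dot. apply: (@rsum_term _ (fun k => x k * x k) k) => i; nra. Qed.

Lemma norm2_scale c x : norm2 (vscale c x) = c * c * norm2 x.
Proof. rewrite /norm2 /dot -rsumZ; apply: eq_bigr => k _; rewrite /vscale; ring. Qed.

Lemma norm_scale c x : norm (vscale c x) = Rabs c * norm x.
Proof.
rewrite /norm norm2_scale sqrt_mult; last exact: norm2_ge0; last nra.
by rewrite -(sqrt_Rsqr_abs c).
Qed.

Lemma norm_lt_sq x e : 0 < e -> norm2 x < e * e -> norm x < e.
Proof.
move=> He H. have := norm_ge0 x. have := norm_sq x. nra.
Qed.

Lemma norm_le_sq x e : 0 <= e -> norm x <= e -> norm2 x <= e * e.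
Proof. move=> He H. have := norm_ge0 x. have := norm_sq x. nra. Qed.

Lemma dot_young x y al : 0 < al -> dot x y <= al * norm2 x + / (4 * al) * norm2 y.
Proof.
move=> Ha; rewrite /norm2 /dot -!rsumZ -rsumD; apply: rsum_le => k.
have H := Rle_0_sqr (2 * al * x k - y k); rewrite /Rsqr in H.
have E : al * (x k * x k) + / (4 * al) * (y k * y k) - x k * y k
   = / (4 * al) * ((2 * al * x k - y k) * (2 * al * x k - y k)) by field; lra.
have : 0 <= / (4 * al) * ((2 * al * x k - y k) * (2 * al * x k - y k)).
  apply: Rmult_le_pos => //; apply/Rlt_le/Rinv_0_lt_compat; lra.
lra.
Qed.

Lemma norm2_sub_young a b c be : 0 < be ->
  norm2 (vsub a b) <= (1 + be) * norm2 (vsub a c) + (1 + / be) * norm2 (vsub c b).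
Proof.
move=> Hb; rewrite /norm2 /dot -!rsumZ -rsumD; apply: rsum_le => k; rewrite /vsub.
set p := a k - c k; set q := c k - b k.
have -> : a k - b k = p + q by rewrite /p /q; ring.
have H : 0 <= / be * (be * p - q) * (be * p - q).
  rewrite Rmult_assoc; apply: Rmult_le_pos; [apply/Rlt_le/Rinv_0_lt_compat; lra|].
  have := Rle_0_sqr (be * p - q); rewrite /Rsqr; lra.
have E : (1 + be) * (p * p) + (1 + / be) * (q * q) - (p + q) * (p + q)
  = / be * (be * p - q) * (be * p - q) by field; lra.
lra.
Qed.

Lemma norm2_convex t y z u :
  norm2 (vsub (vadd (vscale t z) (vscale (1 - t) y)) u)
  = t * norm2 (vsub z u) + (1 - t) * norm2 (vsub y u) - t * (1 - t) * norm2 (vsub z y).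
Proof.
rewrite /norm2 /dot -!rsumZ -rsumD -rsumB; apply: eq_bigr => k _.
rewrite /vsub /vadd /vscale; ring.
Qed.

Lemma norm2_shift y z x e dd :
  norm2 (vsub z (vsub x (vscale e dd))) - norm2 (vsub y (vsub x (vscale e dd)))
  = norm2 (vsub z x) - norm2 (vsub y x) + 2 * e * dot (vsub z y) dd.
Proof.
rewrite /norm2 /dot -!rsumZ -!rsumB -rsumD; apply: eq_bigr => k _.
rewrite /vsub /vadd /vscale; ring.
Qed.

Lemma norm2_par a b c : norm2 (vsub a b) <= 2 * norm2 (vsub a c) + 2 * norm2 (vsub c b).
Proof.
rewrite /norm2 /dot -!rsumZ -rsumD; apply: rsum_le => k; rewrite /vsub.
have := Rle_0_sqr (a k - 2 * c k + b k); rewrite /Rsqr; lra.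
Qed.

End Vec.

Section Descent.
Variable d : nat.
Implicit Types x y z u a b : vec d.

Lemma dot_scaler a u h : dot a (vscale h u) = h * dot a u.
Proof. rewrite /dot -rsumZ; apply: eq_bigr => k _; rewrite /vscale; ring. Qed.
Lemma dot_scalel a u h : dot (vscale h a) u = h * dot a u.
Proof. rewrite /dot -rsumZ; apply: eq_bigr => k _; rewrite /vscale; ring. Qed.
Lemma dot_subl a b u : dot (vsub a b) u = dot a u - dot b u.
Proof. rewrite /dot -rsumB; apply: eq_bigr => k _; rewrite /vsub; ring. Qed.

Lemma line_deriv (f : vec d -> R) (g : vec d -> vec d) x u t :
  has_gradient f g ->
  derivable_pt_lim (fun t => f (vadd x (vscale t u))) t (dot (g (vadd x (vscale t u))) u).
Proof.
move=> Hg eps Heps.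
set z := vadd x (vscale t u).
have Hnu := norm_ge0 u.
have He' : 0 < eps / (2 * (norm u + 1)) by apply: Rdiv_lt_0_compat; lra.
have [del [Hdel H]] := Hg z _ He'.
have Hd' : 0 < del / (norm u + 1) by apply: Rdiv_lt_0_compat; lra.
exists (mkposreal _ Hd') => h Hh0 /= Hh.
have Hh1 : 0 < Rabs h by apply: Rabs_pos_lt.
have Hnh : norm (vscale h u) < del.
  rewrite norm_scale.
  have : Rabs h * (norm u + 1) < del.
    have := Rmult_lt_compat_r (norm u + 1) _ _ ltac:(lra) Hh.
    rewrite /Rdiv Rmult_assoc Rinv_l; lra.
  nra.
have := H _ Hnh.
have -> : vadd z (vscale h u) = vadd x (vscale (t + h) u).
  apply: functional_extensionality => k; rewrite /z /vadd /vscale; ring.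
rewrite dot_scaler norm_scale => H2.
set A := f (vadd x (vscale (t + h) u)) - f z.
have -> : (A / h - dot (g z) u) = (A - h * dot (g z) u) * / h by field.
rewrite Rabs_mult Rabs_inv.
apply: (Rle_lt_trans _ (eps / (2 * (norm u + 1)) * norm u)).
  apply: (Rmult_le_reg_r (Rabs h)) => //.
  have -> : Rabs (A - h * dot (g z) u) * / Rabs h * Rabs h = Rabs (A - h * dot (g z) u).
    field; lra.
  rewrite /A; lra.
have : eps / (2 * (norm u + 1)) * norm u <= eps / 2.
  rewrite /Rdiv Rinv_mult. 
  have Hi : 0 < / (norm u + 1) by apply: Rinv_0_lt_compat; lra.
  have : / (norm u + 1) * norm u <= 1.
    apply: (Rmult_le_reg_l (norm u + 1)); first lra.
    rewrite -Rmult_assoc Rinv_r; lra.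
  have : 0 < / 2 by lra.
  nra.
lra.
Qed.

Lemma descent_sigma (f : vec d -> R) (g : vec d -> vec d) L x y sg :
  0 < L -> has_gradient f g -> smooth L g -> (sg = 1 \/ sg = -1) ->
  sg * (f y - f x - dot (g x) (vsub y x)) <= L / 2 * norm2 (vsub y x).
Proof.
move=> HL Hg Hs Hsg.
set u := vsub y x. set N := norm2 u. set D0 := dot (g x) u.
set phi := fun t => f (vadd x (vscale t u)).
set psi := fun t => sg * (phi t - phi 0 - t * D0) - L / 2 * (t * t) * N.
set psi' := fun t => sg * (dot (g (vadd x (vscale t u))) u - D0) - L * t * N.
have Hd : forall c, 0 <= c <= 1 -> derivable_pt_lim psi c (psi' c).
  move=> c _.
  have H1 := line_deriv x u c Hg.
  have H2 := derivable_pt_lim_mult _ _ _ _ _ (derivable_pt_lim_id c) (derivable_pt_lim_id c).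
  have H3 := derivable_pt_lim_scal _ D0 _ _ (derivable_pt_lim_id c).
  have H4 := derivable_pt_lim_minus _ _ _ _ _ (derivable_pt_lim_minus _ _ _ _ _ H1 (derivable_pt_lim_const (phi 0) c)) H3.
  have H5 := derivable_pt_lim_scal _ sg _ _ H4.
  have H6 := derivable_pt_lim_scal _ (L / 2 * N) _ _ H2.
  have H7 := derivable_pt_lim_minus _ _ _ _ _ H5 H6.
  have E : psi' c = sg * (dot (g (vadd x (vscale c u))) u - 0 - D0 * 1) -
    L / 2 * N * (1 * Ranalysis1.id c + Ranalysis1.id c * 1).
    rewrite /psi' /Ranalysis1.id; field.
  rewrite E.
  apply: (derivable_pt_lim_ext _ _ _ _ _ H7) => t.
  rewrite /psi /mult_real_fct /minus_fct /mult_fct /fct_cte /Ranalysis1.id /phi; field.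
have [c [Hc Hcb]] := MVT_cor2 psi psi' 0 1 ltac:(lra) Hd.
have Hpsi0 : psi 0 = 0 by rewrite /psi; ring.
have Hphi1 : phi 1 = f y.
  rewrite /phi; f_equal; apply: functional_extensionality => k.
  rewrite /vadd /vscale /u /vsub; ring.
have Hphi0 : phi 0 = f x.
  rewrite /phi; f_equal; apply: functional_extensionality => k.
  rewrite /vadd /vscale; ring.
set a := vsub (g (vadd x (vscale c u))) (g x).
have Ha : norm2 a <= L * L * (c * c) * N.
  have := Hs (vadd x (vscale c u)) x.
  have -> : vsub (vadd x (vscale c u)) x = vscale c u.
    apply: functional_extensionality => k; rewrite /vsub /vadd /vscale; ring.
  rewrite norm_scale Rabs_pos_eq; last lra.
  move=> H. have := norm_le_sq (x:=a) _ H.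
  have := norm_sq u. have := norm_ge0 u. rewrite -/N. move=> ? ? H'.
  have : 0 <= L * (c * norm u) by apply: Rmult_le_pos; [lra|apply: Rmult_le_pos; lra].
  move=> Hp. have := H' Hp. nra.
have HE : sg * (dot (g (vadd x (vscale c u))) u - D0) = dot (vscale sg a) u.
  by rewrite dot_scalel dot_subl.
have Hy := dot_young (vscale sg a) u (al := / (2 * L * c)) ltac:(apply: Rinv_0_lt_compat; nra).
rewrite norm2_scale in Hy.
have Hsg2 : sg * sg = 1 by case: Hsg => ->; ring.
rewrite Hsg2 Rmult_1_l in Hy.
have HN : 0 <= N := norm2_ge0 u.
have Hb : / (2 * L * c) * norm2 a <= L * c * N / 2.
  apply: (Rmult_le_reg_l (2 * L * c)); first nra.
  rewrite -Rmult_assoc Rinv_r; last nra.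
  have -> : 2 * L * c * (L * c * N / 2) = L * L * (c * c) * N by field.
  lra.
have E4 : / (4 * / (2 * L * c)) = L * c / 2 by field; lra.
rewrite E4 -/N in Hy.
have Hps : psi' c <= 0.
  rewrite /psi' HE. have : L * c / 2 * N = L * c * N / 2 by field. lra.
have Hpsi1 : psi 1 <= 0 by lra.
move: Hpsi1; rewrite /psi Hphi1 Hphi0 -/D0 -/u -/N; lra.
Qed.

End Descent.

Lemma small_inv (e : R) : 0 < e -> exists N : nat, forall k, (N <= k)%coq_nat -> / (INR k + 1) < e.
Proof.
move=> He; have [N [H1 H2]] := archimed_cor1 e He.
exists N => k Hk.
have HN : 0 < INR N := lt_0_INR _ H2.
have Hk' : INR N <= INR k by apply: le_INR.
apply: (Rle_lt_trans _ (/ INR N)) => //.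
apply: Rinv_le_contravar; lra.
Qed.

Lemma abs_lt_of_sq x e : 0 < e -> x * x < e * e -> Rabs x < e.
Proof.
move=> He H. case: (Rlt_le_dec (Rabs x) e) => // Hle.
have E : Rabs x * Rabs x = x * x by rewrite -Rabs_mult Rabs_pos_eq //; apply: Rle_0_sqr.
have := Rmult_le_compat _ _ _ _ (Rlt_le _ _ He) (Rlt_le _ _ He) Hle Hle. lra.
Qed.

Lemma CV_const (c : R) : Un_cv (fun _ => c) c.
Proof. move=> e He; exists 0%nat => k _; rewrite /R_dist Rminus_diag Rabs_R0 //. Qed.

Lemma CV_bigsum (T : eqType) (r : seq T) (F : T -> nat -> R) (l : T -> R) :
  (forall i, Un_cv (F i) (l i)) ->
  Un_cv (fun k => \big[Rplus/R0]_(i <- r) F i k) (\big[Rplus/R0]_(i <- r) l i).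
Proof.
move=> H; elim: r => [|a s IH].
  rewrite big_nil; apply: (Un_cv_ext (fun _ => 0)); [move=> k; by rewrite big_nil|exact: CV_const].
rewrite big_cons.
apply: (Un_cv_ext (fun k => F a k + \big[Rplus/R0]_(i <- s) F i k)).
  by move=> k; rewrite big_cons.
exact: CV_plus.
Qed.

Section Prox.
Variable d : nat.
Variable h : vec d -> ext.
Hypothesis Hproper : proper_fn h.
Hypothesis Hlsc : lsc h.
Hypothesis Hconv : convex_ext h.
Variable eta : R.
Hypothesis Heta : 0 < eta.
Variable u : vec d.

Let q (w : vec d) := norm2 (vsub w u) / (2 * eta).

Lemma q_convex t y z : q (vadd (vscale t z) (vscale (1 - t) y))
   = t * q z + (1 - t) * q y - t * (1 - t) * (norm2 (vsub z y) / (2 * eta)).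
Proof. rewrite /q norm2_convex; field; lra. Qed.

Lemma lower_bound : exists M, forall z c, h z = Some c -> M <= c + q z.
Proof.
have [y0 Hy0] := Hproper.
case E0: (h y0) Hy0 => [a0|] // _.
have [del [Hdel Hl]] := @Hlsc y0 (a0 - 1) ltac:(rewrite E0 /=; lra).
set K := 2 / del.
have HK : 0 < K by rewrite /K; apply: Rdiv_lt_0_compat; lra.
have key : forall z c, h z = Some c -> a0 - 1 - K * norm (vsub z y0) <= c.
  move=> z c Hz.
  set N := norm (vsub z y0).
  have HN0 : 0 <= N := norm_ge0 _.
  case: (Rlt_le_dec N del) => HN.
    have := Hl z HN; rewrite Hz /= => Hc.
    have : 0 <= K * N by apply: Rmult_le_pos; lra.
    lra.
  set t := del / (2 * N).
  have Ht : 0 < t by rewrite /t; apply: Rdiv_lt_0_compat; lra.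
  have Ht1 : t <= 1.
    rewrite /t; apply: (Rmult_le_reg_r (2 * N)); first lra.
    rewrite /Rdiv Rmult_assoc Rinv_l; lra.
  have [v [Hv Hvle]] := @Hconv z y0 c a0 t Hz E0 (conj (Rlt_le _ _ Ht) Ht1).
  have Hw : vsub (vadd (vscale t z) (vscale (1 - t) y0)) y0 = vscale t (vsub z y0).
    apply: functional_extensionality => k; rewrite /vsub /vadd /vscale; ring.
  have Hnw : norm (vsub (vadd (vscale t z) (vscale (1 - t) y0)) y0) < del.
    rewrite Hw norm_scale Rabs_pos_eq; last lra.
    rewrite -/N /t; field_simplify; lra.
  have := Hl _ Hnw; rewrite Hv /= => Hv'.
  have H1 : t * a0 - 1 < t * c by lra.
  have H2 : a0 - / t < c.
    apply: (Rmult_lt_reg_l t) => //.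
    have -> : t * (a0 - / t) = t * a0 - 1 by field; lra.
    lra.
  have Et : / t = K * N by rewrite /t /K; field; lra.
  rewrite Et in H2.
  have : 0 <= K * N by apply: Rmult_le_pos; lra.
  lra.
set P := norm2 (vsub u y0).
exists (a0 - 1 - eta * K * K - P / (2 * eta)) => z c Hz.
have H1 := key z c Hz.
set N := norm (vsub z y0) in H1.
have HN2 : N * N <= 2 * norm2 (vsub z u) + 2 * P.
  rewrite /N norm_sq; exact: norm2_par.
have HKN : K * N <= N * N / (4 * eta) + eta * K * K.
  have H := Rle_0_sqr (N - 2 * eta * K); rewrite /Rsqr in H.
  apply: (Rmult_le_reg_l (4 * eta)); first lra.
  have -> : 4 * eta * (N * N / (4 * eta) + eta * K * K) = N * N + 4 * eta * eta * K * K by field; lra.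
  nra.
have : N * N / (4 * eta) <= (2 * norm2 (vsub z u) + 2 * P) / (4 * eta).
  apply: Rmult_le_compat_r => //; apply/Rlt_le/Rinv_0_lt_compat; lra.
have -> : (2 * norm2 (vsub z u) + 2 * P) / (4 * eta) = q z + P / (2 * eta).
  rewrite /q; field; lra.
lra.
Qed.

Lemma prox_exists : exists y, is_prox h eta u y.
Proof.
have [M HM] := lower_bound.
have [y0 Hy0] := Hproper.
case E0: (h y0) Hy0 => [a0|] // _.
set E := fun r => exists z c, h z = Some c /\ r = - (c + q z).
have Hb : bound E.
  exists (- M) => r [z [c [Hz ->]]]. have := HM z c Hz. lra.
have Hne : exists r, E r by exists (- (a0 + q y0)), y0, a0.
have [l [Hub Hlub]] := completeness E Hb Hne.
set minf := - l.
have Hinf : forall z c, h z = Some c -> minf <= c + q z.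
  move=> z c Hz. have := Hub (- (c + q z)) (ex_intro _ z (ex_intro _ c (conj Hz erefl))).
  rewrite /minf; lra.
have Happ : forall e, 0 < e -> exists z c, h z = Some c /\ c + q z < minf + e.
  move=> e He. apply: NNPP => Hn.
  have : is_upper_bound E (l - e).
    move=> r [z [c [Hz ->]]].
    case: (Rle_lt_dec (- (c + q z)) (l - e)) => // Hlt.
    exfalso; apply: Hn; exists z, c; split => //; rewrite /minf; lra.
  move=> /Hlub; lra.
have Hseq : forall k : nat, {z : vec d | exists c, h z = Some c /\ c + q z < minf + / (INR k + 1)}.
  move=> k; apply: constructive_indefinite_description.
  have Hk : 0 < / (INR k + 1) by apply: Rinv_0_lt_compat; have := pos_INR k; lra.
  have [z [c [Hz Hc]]] := Happ _ Hk. by exists z, c.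
set Z := fun k => proj1_sig (Hseq k).
have HZ : forall k, exists c, h (Z k) = Some c /\ c + q (Z k) < minf + / (INR k + 1).
  move=> k; exact: proj2_sig (Hseq k).
have Hcauchy : forall j k, norm2 (vsub (Z j) (Z k)) <= 4 * eta * (/ (INR j + 1) + / (INR k + 1)).
  move=> j k.
  have [cj [Hj Hcj]] := HZ j. have [ck [Hk Hck]] := HZ k.
  have [v [Hv Hvle]] := @Hconv (Z j) (Z k) cj ck (/ 2) Hj Hk ltac:(lra).
  have := Hinf _ _ Hv. rewrite q_convex.
  set D := norm2 (vsub (Z j) (Z k)).
  move=> H.
  have : D / (2 * eta) * (/ 2 * (1 - / 2)) <= (/ (INR j + 1) + / (INR k + 1)) / 2 by lra.
  move=> H2.
  set A := / (INR j + 1) + / (INR k + 1) in H2 *.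
  have -> : 4 * eta * A = 8 * eta * (A / 2) by field.
  have -> : D = 8 * eta * (D / (2 * eta) * (/ 2 * (1 - / 2))) by field; lra.
  apply: Rmult_le_compat_l; lra.
have Hcc : forall i, Cauchy_crit (fun k => Z k i).
  move=> i e He.
  have He2 : 0 < e * e / (8 * eta) by apply: Rdiv_lt_0_compat; nra.
  have [N HN] := small_inv He2.
  exists N => j k Hj Hk; rewrite /R_dist.
  have H1 : (Z j i - Z k i) * (Z j i - Z k i) <= norm2 (vsub (Z j) (Z k)) := coord_le _ i.
  have H2 := Hcauchy j k.
  have H3 := HN j Hj. have H4 := HN k Hk.
  have H5 : (Z j i - Z k i) * (Z j i - Z k i) < e * e.
    have : 4 * eta * (/ (INR j + 1) + / (INR k + 1)) < 4 * eta * (2 * (e * e / (8 * eta))).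
      apply: Rmult_lt_compat_l; lra.
    have -> : 4 * eta * (2 * (e * e / (8 * eta))) = e * e by field; lra.
    lra.
  exact: abs_lt_of_sq.
set y := fun i => proj1_sig (R_complete _ (Hcc i)).
have Hy : forall i, Un_cv (fun k => Z k i) (y i) by move=> i; exact: proj2_sig (R_complete _ (Hcc i)).
have conv1 : Un_cv (fun k => norm2 (vsub (Z k) y)) 0.
  have -> : 0 = \big[Rplus/R0]_(i <- index_enum 'I_d) (fun i => (y i - y i) * (y i - y i)) i.
    rewrite -[LHS](Rmult_0_r (INR #|'I_d|)) -rsum_const; apply: eq_bigr => i _; ring.
  apply: (Un_cv_ext (fun k => \big[Rplus/R0]_(i <- index_enum 'I_d) (fun i k => (Z k i - y i) * (Z k i - y i)) i k)) => //.
  apply: CV_bigsum => i; apply: CV_mult; apply: CV_minus => //; exact: CV_const.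
have conv2 : Un_cv (fun k => norm2 (vsub (Z k) u)) (norm2 (vsub y u)).
  apply: (Un_cv_ext (fun k => \big[Rplus/R0]_(i <- index_enum 'I_d) (fun i k => (Z k i - u i) * (Z k i - u i)) i k)) => //.
  apply: (@CV_bigsum _ _ _ (fun i => (y i - u i) * (y i - u i))) => i.
  apply: CV_mult; apply: CV_minus => //; exact: CV_const.
have Hmin : exists c, h y = Some c /\ c + q y <= minf.
  apply: NNPP => Hn.
  have [a [g [Hlt [Hg Hag]]]] : exists a g, lt_ext a (h y) /\ 0 < g /\ a + q y = minf + g.
    case Ey: (h y) => [c|].
      have Hc : minf < c + q y.
        case: (Rle_lt_dec (c + q y) minf) => // Hle; exfalso; apply: Hn; by exists c.
      exists ((c + minf - q y) / 2), ((c + q y - minf) / 2); rewrite /=; split; [lra|split; lra].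
    exists (minf - q y + 1), 1; rewrite /=; split => //; split; lra.
  have [del [Hdel Hl]] := @Hlsc y a Hlt.
  have [N1 HN1] := conv1 (del * del) ltac:(nra).
  have [N2 HN2] := conv2 (g * eta) ltac:(nra).
  have [N3 HN3] := small_inv (e := g / 2) ltac:(lra).
  set k := Nat.max N1 (Nat.max N2 N3).
  have Hk1 : (k >= N1)%coq_nat by rewrite /k; lia.
  have Hk2 : (k >= N2)%coq_nat by rewrite /k; lia.
  have Hk3 : (N3 <= k)%coq_nat by rewrite /k; lia.
  have := HN1 k Hk1; rewrite /R_dist Rminus_0_r Rabs_pos_eq; last exact: norm2_ge0.
  move=> /(norm_lt_sq Hdel) /Hl.
  have [ck [Hk Hck]] := HZ k.
  rewrite Hk /= => Hak.
  have := HN2 k Hk2; rewrite /R_dist => /Rabs_def2 [Hq1 Hq2].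
  have Hq : q y - g / 2 < q (Z k).
    rewrite /q. apply: (Rmult_lt_reg_l (2 * eta)); first lra.
    have -> : 2 * eta * (norm2 (vsub y u) / (2 * eta) - g / 2) = norm2 (vsub y u) - g * eta by field; lra.
    have -> : 2 * eta * (norm2 (vsub (Z k) u) / (2 * eta)) = norm2 (vsub (Z k) u) by field; lra.
    lra.
  have := HN3 k Hk3. lra.
have [c [Hyc Hcy]] := Hmin.
exists y => z; rewrite Hyc /=.
case Ez: (h z) => [cz|] //=.
have := Hinf z cz Ez. rewrite /q in Hcy *. lra.
Qed.

End Prox.

Lemma norm2_sym d (a b : vec d) : norm2 (vsub a b) = norm2 (vsub b a).
Proof. apply: eq_bigr => k _; rewrite /vsub; ring. Qed.

Section ProxProps.
Variable d : nat.
Variable h : vec d -> ext.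
Hypothesis Hproper : proper_fn h.
Hypothesis Hlsc : lsc h.
Hypothesis Hconv : convex_ext h.
Variable eta : R.
Hypothesis Heta : 0 < eta.

Lemma prox_spec u : is_prox h eta u (prox h eta u).
Proof.
rewrite /prox; apply: epsilon_spec; exact: prox_exists.
Qed.

Lemma prox_fin u : exists c, h (prox h eta u) = Some c.
Proof.
have [y0 Hy0] := Hproper.
case E0: (h y0) Hy0 => [a0|] // _.
have := prox_spec u y0; rewrite E0.
case: (h (prox h eta u)) => [c|] //= _; by exists c.
Qed.

Lemma three_point u y z cy cz : is_prox h eta u y -> h y = Some cy -> h z = Some cz ->
  cy + norm2 (vsub y u) / (2 * eta) + norm2 (vsub y z) / (2 * eta)
  <= cz + norm2 (vsub z u) / (2 * eta).
Proof.
move=> Hp Hy Hz.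
set X := cy + norm2 (vsub y u) / (2 * eta) + norm2 (vsub y z) / (2 * eta).
set Y := cz + norm2 (vsub z u) / (2 * eta).
set P := norm2 (vsub y z) / (2 * eta).
have HP : 0 <= P.
  rewrite /P; apply: Rmult_le_pos; [exact: norm2_ge0|apply/Rlt_le/Rinv_0_lt_compat; lra].
have key : forall t, 0 < t <= 1 -> X <= Y + t * P.
  move=> t Ht.
  have [v [Hv Hvle]] := @Hconv z y cz cy t Hz Hy ltac:(lra).
  have := Hp (vadd (vscale t z) (vscale (1 - t) y)).
  rewrite Hy Hv /= q_convex // (norm2_sym z y) -/P => H.
  have H2 : t * X <= t * (Y + t * P).
    rewrite /X /Y -/P; nra.
  apply: (Rmult_le_reg_l t) => //; lra.
apply: Rnot_lt_le => Hlt.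
set t := Rmin 1 ((X - Y) / (2 * (P + 1))).
have Hpos : 0 < (X - Y) / (2 * (P + 1)) by apply: Rdiv_lt_0_compat; lra.
have Ht : 0 < t <= 1.
  rewrite /t; split; [apply: Rmin_glb_lt; lra| exact: Rmin_l].
have := key t Ht.
have : t * P < X - Y.
  have Ht2 : t <= (X - Y) / (2 * (P + 1)) := Rmin_r _ _.
  have : t * P <= (X - Y) / (2 * (P + 1)) * P by apply: Rmult_le_compat_r.
  have : (X - Y) / (2 * (P + 1)) * P < X - Y.
    apply: (Rmult_lt_reg_l (2 * (P + 1))); first lra.
    have -> : 2 * (P + 1) * ((X - Y) / (2 * (P + 1)) * P) = (X - Y) * P by field; lra.
    nra.
  lra.
lra.
Qed.

Variables (f : vec d -> R) (g : vec d -> vec d) (L : R).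
Hypothesis Hdesc : forall x y sg, (sg = 1 \/ sg = -1) ->
  sg * (f y - f x - dot (g x) (vsub y x)) <= L / 2 * norm2 (vsub y x).

Lemma dot_combo (gx dd x y z : vec d) :
  dot gx (vsub y x) - dot gx (vsub z x) + dot (vsub z y) dd = dot (vsub y z) (vsub gx dd).
Proof.
rewrite /dot -!rsumB -rsumD; apply: eq_bigr => k _; rewrite /vsub; ring.
Qed.

Lemma key_step x dd z cy cz :
  let y := prox h eta (vsub x (vscale eta dd)) in
  h y = Some cy -> h z = Some cz ->
  f y + cy <= f z + cz + dot (vsub y z) (vsub (g x) dd)
     + (L / 2 - / (2 * eta)) * norm2 (vsub y x) + (L / 2 + / (2 * eta)) * norm2 (vsub z x)
     - / (2 * eta) * norm2 (vsub y z).
Proof.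
move=> y Hy Hz.
have H3 := three_point (prox_spec (vsub x (vscale eta dd))) Hy Hz.
rewrite -/y in H3.
have Hs := norm2_shift y z x eta dd.
have D1 := Hdesc x y (or_introl erefl).
have D2 := Hdesc x z (or_intror erefl).
have Hc := dot_combo (g x) dd x y z.
set ny := norm2 (vsub y x) in D1 Hs *.
set nz := norm2 (vsub z x) in D2 Hs *.
set nyu := norm2 (vsub y (vsub x (vscale eta dd))) in H3 Hs.
set nzu := norm2 (vsub z (vsub x (vscale eta dd))) in H3 Hs.
set P := norm2 (vsub y z) in H3 *.
have E : nzu / (2 * eta) - nyu / (2 * eta) = nz / (2 * eta) - ny / (2 * eta) + dot (vsub z y) dd.
  have -> : nzu / (2 * eta) - nyu / (2 * eta) = (nzu - nyu) / (2 * eta) by field; lra.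
  rewrite Hs; field; lra.
have E2 : forall a, a / (2 * eta) = / (2 * eta) * a by move=> a; rewrite /Rdiv Rmult_comm.
rewrite !E2 in E H3.
lra.
Qed.

End ProxProps.


Lemma favg_desc d n (fs : nat -> vec d -> R) gs L :
  (1 <= n)%N -> 0 < L ->
  (forall i, (i < n)%N -> has_gradient (fs i) (gs i)) ->
  (forall i, (i < n)%N -> smooth L (gs i)) ->
  forall x y sg, (sg = 1 \/ sg = -1) ->
  sg * (favg n fs y - favg n fs x - dot (gavg n gs x) (vsub y x)) <= L / 2 * norm2 (vsub y x).
Proof.
move=> Hn HL Hg Hs x y sg Hsg.
have Hn' : 0 < INR n by apply: lt_0_INR; apply/ltP.
have Edot : dot (gavg n gs x) (vsub y x) = / INR n * \rsum_(i < n) dot (gs i x) (vsub y x).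
  rewrite /dot /gavg.
  transitivity (/ INR n * \rsum_(k < d) \rsum_(i < n) (gs i x k * vsub y x k)).
    rewrite -rsumZ; apply: eq_bigr => k _; rewrite Rmult_assoc rsum_mulr //.
  by rewrite rsum_exch.
have E : sg * (favg n fs y - favg n fs x - dot (gavg n gs x) (vsub y x))
   = / INR n * \rsum_(i < n) (sg * (fs i y - fs i x - dot (gs i x) (vsub y x))).
  rewrite Edot /favg -!rsumZ -!rsumB -!rsumZ; apply: eq_bigr => i _; ring.
rewrite E.
have : \rsum_(i < n) (sg * (fs i y - fs i x - dot (gs i x) (vsub y x)))
   <= \rsum_(i < n) (L / 2 * norm2 (vsub y x)).
  apply: rsum_le => i; apply: descent_sigma => //; [exact: Hg|exact: Hs].
rewrite rsum_const card_ord => H.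
have Hi : 0 < / INR n by apply: Rinv_0_lt_compat.
have := Rmult_le_compat_l _ _ _ (Rlt_le _ _ Hi) H.
have -> : / INR n * (INR n * (L / 2 * norm2 (vsub y x))) = L / 2 * norm2 (vsub y x) by field; lra.
done.
Qed.

Section Coord.
Variables (X B : finType) (get : X -> B) (upd : X -> B -> X).
Hypothesis get_upd : forall x y, get (upd x y) = y.
Hypothesis upd_upd : forall x y z, upd (upd x y) z = upd x z.
Hypothesis upd_get : forall x, upd x (get x) = x.

Lemma part_sum (G : X -> R) :
  \rsum_(x : X) G x = \rsum_(z : B) \big[Rplus/R0]_(x | get x == z) G x.
Proof.
rewrite (partition_big get (fun _ => true)) //.
Qed.

Lemma coord_inner (G : X -> R) y z :
  \big[Rplus/R0]_(x | get x == z) G (upd x y) = \big[Rplus/R0]_(x | get x == y) G x.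
Proof.
rewrite (reindex_onto (fun x => upd x z) (fun x => upd x y)); last first.
  by move=> x /eqP <-; rewrite upd_upd upd_get.
apply: eq_big => x.
  rewrite get_upd eqxx /= upd_upd.
  apply/eqP/eqP => [<-|Hx]; first by rewrite get_upd.
  by rewrite -Hx upd_get.
move=> /andP [_ /eqP Hx]. by rewrite Hx.
Qed.

Lemma coord_sum (G : X -> R) :
  \rsum_(x : X) G x * INR #|B| = \rsum_(x : X) \rsum_(y : B) G (upd x y).
Proof.
rewrite rsum_exch.
transitivity (\rsum_(y : B) (INR #|B| * \big[Rplus/R0]_(x | get x == y) G x)).
  by rewrite -rsum_mulr (part_sum G) rsumZ Rmult_comm.
apply: eq_bigr => y _.
rewrite part_sum.
transitivity (\rsum_(z : B) \big[Rplus/R0]_(x | get x == y) G x).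
  by rewrite rsum_const.
apply: eq_bigr => z _; by rewrite coord_inner.
Qed.
End Coord.

Section Var.
Variables (n b : nat).
Hypothesis Hn : (0 < n)%N.
Hypothesis Hb : (0 < b)%N.
Notation BT := {ffun 'I_b -> 'I_n}.

Definition fupd (I : BT) (j : 'I_b) (y : 'I_n) : BT := [ffun k => if k == j then y else I k].

Lemma fupd_get I j y : fupd I j y j = y. Proof. by rewrite /fupd ffunE eqxx. Qed.
Lemma fupd_upd I j y z : fupd (fupd I j y) j z = fupd I j z.
Proof. apply/ffunP => k; rewrite /fupd !ffunE; by case: (k == j). Qed.
Lemma fupd_self I j : fupd I j (I j) = I.
Proof. apply/ffunP => k; rewrite /fupd !ffunE; by case: (eqVneq k j) => [->|]. Qed.

Lemma INRn_pos : 0 < INR n. Proof. by apply: lt_0_INR; apply/ltP. Qed.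

Lemma cross_zero (e : 'I_n -> R) j j' : j != j' -> \rsum_(i < n) e i = 0 ->
  \rsum_(I : BT) (e (I j) * e (I j')) = 0.
Proof.
move=> Hjj He.
have H := @coord_sum BT _ (fun I : BT => I j) (fun (I : BT) (y : 'I_n) => fupd I j y) (fun x y => fupd_get x j y)
  (fun x y z => fupd_upd x j y z) (fun x => fupd_self x j) (fun I : BT => e (I j) * e (I j')).
rewrite card_ord in H.
have E : \rsum_(I : BT) \rsum_(y : 'I_n) (e (fupd I j y j) * e (fupd I j y j')) = 0.
  transitivity (\rsum_(I : BT) 0); last by rewrite rsum_const; ring.
  apply: eq_bigr => I _.
  transitivity (\rsum_(y : 'I_n) e y * e (I j')).
    apply: eq_bigr => y _; rewrite fupd_get /fupd ffunE.
    by rewrite eq_sym (negbTE Hjj).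
  by rewrite -rsum_mulr He Rmult_0_l.
rewrite E -rsum_mulr in H.
have := INRn_pos.
move: H; set S := \rsum_(I : BT) _; nra.
Qed.

Lemma diag_sum (e : 'I_n -> R) j :
  \rsum_(I : BT) (e (I j) * e (I j)) = INR #|BT| * (/ INR n * \rsum_(i < n) (e i * e i)).
Proof.
have H := @coord_sum BT _ (fun I : BT => I j) (fun (I : BT) (y : 'I_n) => fupd I j y) (fun x y => fupd_get x j y)
  (fun x y z => fupd_upd x j y z) (fun x => fupd_self x j) (fun I : BT => e (I j) * e (I j)).
rewrite card_ord in H.
have E : \rsum_(I : BT) \rsum_(y : 'I_n) (e (fupd I j y j) * e (fupd I j y j))
   = INR #|BT| * \rsum_(i < n) (e i * e i).
  rewrite -rsum_const; apply: eq_bigr => I _; apply: eq_bigr => y _; by rewrite fupd_get.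
rewrite E -rsum_mulr in H.
have Hn' := INRn_pos.
apply: (Rmult_eq_reg_r (INR n)); last lra.
rewrite H; field; lra.
Qed.

Lemma sq_sum (F : 'I_b -> R) :
  (\rsum_(j < b) F j) * (\rsum_(j < b) F j) = \rsum_(j < b) \rsum_(j' < b) (F j * F j').
Proof.
rewrite rsum_mulr; apply: eq_bigr => j _; by rewrite -rsumZ.
Qed.

Lemma var_scalar (e : 'I_n -> R) : \rsum_(i < n) e i = 0 ->
  \rsum_(I : BT) ((\rsum_(j < b) e (I j)) * (\rsum_(j < b) e (I j)))
  = INR #|BT| * INR b * (/ INR n * \rsum_(i < n) (e i * e i)).
Proof.
move=> He.
transitivity (\rsum_(j < b) \rsum_(j' < b) \rsum_(I : BT) (e (I j) * e (I j'))).
  transitivity (\rsum_(I : BT) \rsum_(j < b) \rsum_(j' < b) (e (I j) * e (I j'))).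
    by apply: eq_bigr => I _; rewrite sq_sum.
  rewrite rsum_exch; apply: eq_bigr => j _; by rewrite rsum_exch.
transitivity (\rsum_(j < b) (INR #|BT| * (/ INR n * \rsum_(i < n) (e i * e i)))).
  apply: eq_bigr => j _.
  rewrite (bigD1 j) //= diag_sum.
  have -> : \big[Rplus/R0]_(i < b | i != j) (\rsum_(I : BT) (e (I j) * e (I i))) = 0.
    transitivity (\big[Rplus/R0]_(i < b | i != j) 0).
      apply: eq_bigr => i Hi; apply: cross_zero => //; by rewrite eq_sym.
    by elim/big_rec: _ => // i y _ ->; lra.
  by rewrite Rplus_0_r.
rewrite rsum_const card_ord; ring.
Qed.

End Var.

Ltac nsort := repeat match goal with
  | |- context [Finite.sort (fintype_ordinal__canonical__fintype_Finite ?n)] =>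
      change (Finite.sort (fintype_ordinal__canonical__fintype_Finite n)) with (ordinal n)
  end.

Lemma var_le n (a : 'I_n -> R) : (0 < n)%N ->
  \rsum_(i < n) ((a i - / INR n * \rsum_(i < n) a i) * (a i - / INR n * \rsum_(i < n) a i))
  <= \rsum_(i < n) (a i * a i).
Proof.
move=> Hn. have Hn' : 0 < INR n by apply: lt_0_INR; apply/ltP.
set ab := / INR n * \rsum_(i < n) a i.
have Hs : \rsum_(i < n) a i = INR n * ab by rewrite /ab; field; lra.
have E : \rsum_(i < n) (a i * a i) - \rsum_(i < n) ((a i - ab) * (a i - ab))
   = 2 * ab * (\rsum_(i < n) a i) - \rsum_(i < n) (ab * ab).
  rewrite -rsumB.
  transitivity (\rsum_(i < n) (2 * ab * a i - ab * ab)).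
    apply: eq_bigr => i _; ring.
  by rewrite rsumB rsumZ.
rewrite rsum_const card_ord Hs in E.
have : 0 <= INR n * (ab * ab) by apply: Rmult_le_pos; [lra| apply: Rle_0_sqr].
lra.
Qed.

Lemma smooth_sq d L (g : vec d -> vec d) x y : 0 < L -> smooth L g ->
  norm2 (vsub (g x) (g y)) <= L * L * norm2 (vsub x y).
Proof.
move=> HL Hs. have H := Hs x y.
have := norm_le_sq (Rmult_le_pos _ _ (Rlt_le _ _ HL) (norm_ge0 (vsub x y))) H.
have := norm_sq (vsub x y). nra.
Qed.

Section VarVec.
Variables (d n b : nat) (gs : nat -> vec d -> vec d) (L : R).
Hypothesis Hn : (0 < n)%N.
Hypothesis Hb : (0 < b)%N.
Hypothesis HL : 0 < L.
Hypothesis Hs : forall i, (i < n)%N -> smooth L (gs i).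
Notation BT := {ffun 'I_b -> 'I_n}.

Lemma var_vec x xt (Itf : BT -> nat -> nat) :
  (forall I (j : 'I_b), Itf I j = I j) ->
  \rsum_(I : BT) norm2 (vsub (gavg n gs x) (vr_grad gs b (Itf I) x xt (gavg n gs xt)))
  <= INR #|BT| * (L * L / INR b * norm2 (vsub x xt)).
Proof.
move=> HIt.
have Hn' : 0 < INR n by apply: lt_0_INR; apply/ltP.
have Hb' : 0 < INR b by apply: lt_0_INR; apply/ltP.
pose a (k : 'I_d) (i : 'I_n) := gs i x k - gs i xt k.
pose ab (k : 'I_d) := / INR n * \rsum_(i < n) a k i.
pose e (k : 'I_d) (i : 'I_n) := a k i - ab k.
have He : forall k, \rsum_(i < n) e k i = 0.
  move=> k; rewrite /e rsumB rsum_const card_ord /ab; nsort; field; lra.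
have Hcoord : forall (I : BT) k,
  vsub (gavg n gs x) (vr_grad gs b (Itf I) x xt (gavg n gs xt)) k
  = - / INR b * \rsum_(j < b) e k (I j).
  move=> I k.
  have S1 : \rsum_(j < b) (gs (Itf I j) x k - gs (Itf I j) xt k) = \rsum_(j < b) a k (I j).
    by apply: eq_bigr => j _; rewrite HIt.
  have S2 : \rsum_(j < b) e k (I j) = \rsum_(j < b) a k (I j) - INR b * ab k.
    by rewrite /e rsumB rsum_const card_ord.
  have S3 : ab k = / INR n * (\rsum_(i < n) gs i x k) - / INR n * (\rsum_(i < n) gs i xt k).
    rewrite /ab /a rsumB; nsort; ring.
  rewrite /vsub /vr_grad /gavg S1 S2 S3.
  set A := \rsum_(j < b) a k (I j). nsort. field; lra.
have Step1 : \rsum_(I : BT) norm2 (vsub (gavg n gs x) (vr_grad gs b (Itf I) x xt (gavg n gs xt)))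
   = \rsum_(k < d) (/ INR b * / INR b * (INR #|BT| * INR b * (/ INR n * \rsum_(i < n) (e k i * e k i)))).
  transitivity (\rsum_(k < d) \rsum_(I : BT) (/ INR b * / INR b * ((\rsum_(j < b) e k (I j)) * (\rsum_(j < b) e k (I j))))).
    rewrite rsum_exch; apply: eq_bigr => I _; apply: eq_bigr => k _.
    rewrite Hcoord; ring.
  apply: eq_bigr => k _; rewrite rsumZ var_scalar //.
rewrite Step1.
have Step2 : forall k, \rsum_(i < n) (e k i * e k i) <= \rsum_(i < n) (a k i * a k i).
  move=> k; exact: var_le.
have Step3 : \rsum_(k < d) \rsum_(i < n) (a k i * a k i) <= INR n * (L * L * norm2 (vsub x xt)).
  have -> : INR n * (L * L * norm2 (vsub x xt)) = \rsum_(i < n) (L * L * norm2 (vsub x xt)).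
    by rewrite rsum_const card_ord.
  rewrite rsum_exch; apply: rsum_le => i.
  have := smooth_sq x xt HL (Hs (ltn_ord i)). done.
have Hc : 0 <= INR #|BT| := pos_INR _.
have : \rsum_(k < d) (/ INR b * / INR b * (INR #|BT| * INR b * (/ INR n * \rsum_(i < n) (e k i * e k i))))
   <= \rsum_(k < d) (/ INR b * / INR b * (INR #|BT| * INR b * (/ INR n * \rsum_(i < n) (a k i * a k i)))).
  apply: rsum_le => k.
  have H0 : 0 <= / INR b * / INR b * (INR #|BT| * INR b * / INR n).
    apply: Rmult_le_pos; [apply: Rmult_le_pos; apply/Rlt_le/Rinv_0_lt_compat; lra|].
    apply: Rmult_le_pos; [apply: Rmult_le_pos; lra|apply/Rlt_le/Rinv_0_lt_compat; lra].
  have := Rmult_le_compat_l _ _ _ H0 (Step2 k).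
  have E1 : forall s, / INR b * / INR b * (INR #|BT| * INR b * (/ INR n * s))
     = / INR b * / INR b * (INR #|BT| * INR b * / INR n) * s by move=> s; ring.
  by rewrite !E1.
rewrite rsumZ.
have E2 : forall s, / INR b * / INR b * (INR #|BT| * INR b * (/ INR n * s))
     = INR #|BT| / (INR b * INR n) * s by move=> s; field; lra.
have E3 : \rsum_(k < d) (/ INR b * / INR b * (INR #|BT| * INR b * (/ INR n * \rsum_(i < n) (a k i * a k i))))
   = INR #|BT| / (INR b * INR n) * \rsum_(k < d) \rsum_(i < n) (a k i * a k i).
  rewrite -rsumZ; apply: eq_bigr => k _; exact: E2.
rewrite E3.
move=> H.
apply: (Rle_trans _ _ _ H).
have H0 : 0 <= INR #|BT| / (INR b * INR n).
  apply: Rmult_le_pos => //; apply/Rlt_le/Rinv_0_lt_compat; nra.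
have := Rmult_le_compat_l _ _ _ H0 Step3.
have -> : INR #|BT| / (INR b * INR n) * (INR n * (L * L * norm2 (vsub x xt)))
   = INR #|BT| * (L * L / INR b * norm2 (vsub x xt)) by field; lra.
done.
Qed.
End VarVec.

Definition Fr d n (fs : nat -> vec d -> R) (h : vec d -> ext) (x : vec d) : R :=
  match Fobj n fs h x with Some v => v | None => 0 end.

Lemma norm2_self d (x : vec d) : norm2 (vsub x x) = 0.
Proof.
rewrite /norm2 /dot; transitivity (\rsum_(k < d) 0).
  apply: eq_bigr => k _; rewrite /vsub; ring.
rewrite rsum_const; ring.
Qed.

Lemma dot_zero d (a c : vec d) : dot a (vsub c c) = 0.
Proof.
rewrite /dot; transitivity (\rsum_(k < d) 0).
  apply: eq_bigr => k _; rewrite /vsub; ring.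
rewrite rsum_const; ring.
Qed.

Section Step.
Variables (d n : nat) (fs : nat -> vec d -> R) (gs : nat -> vec d -> vec d) (L : R).
Hypothesis Hn : (1 <= n)%N.
Hypothesis HL : 0 < L.
Hypothesis Hgrad : forall i, (i < n)%N -> has_gradient (fs i) (gs i).
Hypothesis Hsmooth : forall i, (i < n)%N -> smooth L (gs i).
Variable h : vec d -> ext.
Hypothesis Hproper : proper_fn h.
Hypothesis Hlsc : lsc h.
Hypothesis Hconv : convex_ext h.

Let eta := / (3 * L).
Let f := favg n fs.
Let g := gavg n gs.

Lemma eta_pos : 0 < eta. Proof. rewrite /eta; apply: Rinv_0_lt_compat; lra. Qed.

Lemma Fr_fin x c : h x = Some c -> Fr n fs h x = c + f x.
Proof. by rewrite /Fr /Fobj => ->. Qed.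

Lemma Fr_prox u : exists c, h (prox h eta u) = Some c /\ Fr n fs h (prox h eta u) = c + f (prox h eta u).
Proof.
have [c Hc] := prox_fin Hproper Hlsc Hconv eta_pos u.
exists c; split => //; exact: Fr_fin.
Qed.

Let Hdesc := favg_desc Hn HL Hgrad Hsmooth.

Lemma det_step x cx xt v c' M :
  h x = Some cx -> 0 < M -> 0 <= c' -> c' * (1 + M) <= L ->
  let xp := prox h eta (vsub x (vscale eta v)) in
  let xb := prox h eta (vsub x (vscale eta (g x))) in
  Fr n fs h xp + c' * norm2 (vsub xp xt)
  <= Fr n fs h x - L / 2 * norm2 (vsub xb x) + eta / 2 * norm2 (vsub (g x) v)
     + c' * (1 + / M) * norm2 (vsub x xt).
Proof.
move=> Hx HM Hc' Hc'M xp xb.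
have [cb [Hb HFb]] := Fr_prox (vsub x (vscale eta (g x))).
have [cp [Hp HFp]] := Fr_prox (vsub x (vscale eta v)).
rewrite -/xp -/xb in Hb HFb Hp HFp.
rewrite HFp (Fr_fin Hx).
have Hi2 : / (2 * eta) = 3 * L / 2 by rewrite /eta; field; lra.
have K1 := key_step Hproper Hlsc Hconv eta_pos Hdesc (x:=x) (dd:=g x) Hb Hx.
rewrite -/xb dot_zero norm2_self Hi2 in K1.
have K2 := key_step Hproper Hlsc Hconv eta_pos Hdesc (x:=x) (dd:=v) Hp Hb.
rewrite -/xp Hi2 in K2.
have Y := dot_young (vsub xp xb) (vsub (g x) v) (al := 3 * L / 2) ltac:(lra).
have E4 : / (4 * (3 * L / 2)) = eta / 2 by rewrite /eta; field; lra.
rewrite E4 in Y.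
have Y2 := norm2_sub_young xp xt x HM.
set np := norm2 (vsub xp x) in K2 Y2 *.
set nb := norm2 (vsub xb x) in K1 K2 *.
set npb := norm2 (vsub xp xb) in K2 Y.
set W := norm2 (vsub (g x) v) in Y *.
set npt := norm2 (vsub xp xt) in Y2 *.
set nxt := norm2 (vsub x xt) in Y2 *.
have Hnp : 0 <= np := norm2_ge0 _.
have P1 : c' * npt <= c' * (1 + M) * np + c' * (1 + / M) * nxt.
  have := Rmult_le_compat_l _ _ _ Hc' Y2. lra.
have P2 : c' * (1 + M) * np <= L * np by apply: Rmult_le_compat_r.
rewrite /f in K1 K2 *.
rewrite /g in Y. lra.
Qed.


Lemma exp_step b x cx xt c' M (Itf : {ffun 'I_b -> 'I_n} -> nat -> nat) :
  (0 < b)%N -> (forall I (j : 'I_b), Itf I j = I j) ->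
  h x = Some cx -> 0 < M -> 0 <= c' -> c' * (1 + M) <= L ->
  forall (xp : {ffun 'I_b -> 'I_n} -> vec d) xb,
  (forall I, xp I = prox h eta (vsub x (vscale eta (vr_grad gs b (Itf I) x xt (g xt))))) ->
  xb = prox h eta (vsub x (vscale eta (g x))) ->
  / INR #|{: {ffun 'I_b -> 'I_n}}| * (\rsum_(I : {ffun 'I_b -> 'I_n}) (Fr n fs h (xp I) + c' * norm2 (vsub (xp I) xt)))
  <= Fr n fs h x + (c' * (1 + / M) + L / (6 * INR b)) * norm2 (vsub x xt)
     - L / 2 * norm2 (vsub xb x).
Proof.
move=> Hb HIt Hx HM Hc' Hc'M xp xb Hxp Hxb.
have Hcard : 0 < INR #|{: {ffun 'I_b -> 'I_n}}|.
  apply: lt_0_INR; apply/ltP; apply/card_gt0P; by exists [ffun _ => Ordinal Hn].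
have Hb' : 0 < INR b by apply: lt_0_INR; apply/ltP.
have H1 : (\rsum_(I : {ffun 'I_b -> 'I_n}) (Fr n fs h (xp I) + c' * norm2 (vsub (xp I) xt)))
  <= (\rsum_(I : {ffun 'I_b -> 'I_n}) (Fr n fs h x - L / 2 * norm2 (vsub xb x)
        + c' * (1 + / M) * norm2 (vsub x xt)
        + eta / 2 * norm2 (vsub (g x) (vr_grad gs b (Itf I) x xt (g xt))))).
  apply: rsum_le => I.
  have := det_step xt (vr_grad gs b (Itf I) x xt (g xt)) Hx HM Hc' Hc'M. rewrite -Hxb -Hxp. lra.
rewrite [X in _ <= X]rsumD [X in _ <= X + _]rsum_const in H1.
have V := var_vec Hn Hb HL Hsmooth x xt HIt.
rewrite -/g in V.
have H2 : (\rsum_(I : {ffun 'I_b -> 'I_n}) (eta / 2 * norm2 (vsub (g x) (vr_grad gs b (Itf I) x xt (g xt)))))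
   <= eta / 2 * (INR #|{: {ffun 'I_b -> 'I_n}}| * (L * L / INR b * norm2 (vsub x xt))).
  rewrite rsumZ; apply: Rmult_le_compat_l => //; have := eta_pos; lra.
apply: (Rmult_le_reg_l (INR #|{: {ffun 'I_b -> 'I_n}}|)) => //.
rewrite -Rmult_assoc Rinv_r; last lra.
rewrite Rmult_1_l.
have E : eta / 2 * (INR #|{: {ffun 'I_b -> 'I_n}}| * (L * L / INR b * norm2 (vsub x xt)))
  = INR #|{: {ffun 'I_b -> 'I_n}}| * (L / (6 * INR b) * norm2 (vsub x xt)) by rewrite /eta; field; lra.
rewrite E in H2.
set S := \rsum_(I : {ffun 'I_b -> 'I_n}) _ in H1.
set T := \rsum_(I : {ffun 'I_b -> 'I_n}) _ in H2.
set C := INR #|{: {ffun 'I_b -> 'I_n}}|.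
have H1' : S <= C * (Fr n fs h x - L / 2 * norm2 (vsub xb x) +
     c' * (1 + / M) * norm2 (vsub x xt)) + T := H1.
have H2' : T <= C * (L / (6 * INR b) * norm2 (vsub x xt)) := H2.
clear H1 H2 V E.
apply: (Rle_trans _ _ _ H1').
have -> : C * (Fr n fs h x + (c' * (1 + / M) + L / (6 * INR b)) * norm2 (vsub x xt) -
   L / 2 * norm2 (vsub xb x)) = C * (Fr n fs h x - L / 2 * norm2 (vsub xb x) +
     c' * (1 + / M) * norm2 (vsub x xt)) + C * (L / (6 * INR b) * norm2 (vsub x xt)) by ring.
lra.
Qed.

End Step.

Section Om.
Variables (n S m b : nat).
Notation Om := (Omega n S m b).

Definition oupd (w : Om) (s0 : 'I_S) (t0 : 'I_m) (I : {ffun 'I_b -> 'I_n}) : Om :=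
  [ffun s' => if s' == s0 then [ffun t' => if t' == t0 then I else w s' t'] else w s'].

Lemma oupd_get w s0 t0 I : oupd w s0 t0 I s0 t0 = I.
Proof. rewrite /oupd ffunE eqxx /= ffunE eqxx //. Qed.

Lemma oupd_upd w s0 t0 I J : oupd (oupd w s0 t0 I) s0 t0 J = oupd w s0 t0 J.
Proof.
apply/ffunP => s; rewrite /oupd !ffunE; case: (eqVneq s s0) => [->|] //.
apply/ffunP => t; rewrite !ffunE; by case: (t == t0).
Qed.

Lemma oupd_self w s0 t0 : oupd w s0 t0 (w s0 t0) = w.
Proof.
apply/ffunP => s; rewrite /oupd !ffunE; case: (eqVneq s s0) => [->|] //.
apply/ffunP => t; rewrite !ffunE; by case: (eqVneq t t0) => [->|].
Qed.

Lemma draws_upd_same w s0 t0 I (j : 'I_b) : draws (oupd w s0 t0 I) s0 t0 j = I j.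
Proof. by rewrite /draws !valK oupd_get. Qed.

Lemma draws_upd_other w s0 t0 I s t j :
  ~ (s = val s0 /\ t = val t0) -> draws (oupd w s0 t0 I) s t j = draws w s t j.
Proof.
move=> Hne; rewrite /draws.
case: insubP => [s' _ Es|] //; case: insubP => [t' _ Et|] //; case: insubP => [j' _ Ej|] //.
rewrite /oupd !ffunE.
case: (eqVneq s' s0) => [Hs|] //.
rewrite ffunE; case: (eqVneq t' t0) => [Ht|] //.
exfalso; apply: Hne; by rewrite -Es -Et Hs Ht.
Qed.

End Om.

Section Iter.
Variables (d n : nat) (gs : nat -> vec d -> vec d) (h : vec d -> ext) (eta : R) (b : nat).

Lemma inner_iter_ext (It It' : nat -> nat -> nat) snap t :
  (forall t', (t' < t)%N -> forall j, It t' j = It' t' j) ->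
  inner_iter n gs h eta b It snap t = inner_iter n gs h eta b It' snap t.
Proof.
elim: t => [|t IH] H //=.
rewrite IH; last by move=> t' Ht' j; apply: H; exact: ltnW.
have E : It t = It' t by apply: functional_extensionality => j; apply: H.
by rewrite E.
Qed.

Variable m : nat.
Lemma snapshot_ext (idx idx' : nat -> nat -> nat -> nat) x0 s :
  (forall s', (s' < s)%N -> forall t j, idx s' t j = idx' s' t j) ->
  snapshot n gs h eta b m idx x0 s = snapshot n gs h eta b m idx' x0 s.
Proof.
elim: s => [|s IH] H //=.
rewrite IH; last by move=> s' Hs' t j; apply: H; exact: ltnW.
apply: inner_iter_ext => t' _ j; exact: H.
Qed.
End Iter.

Fixpoint ec (M A : R) (k : nat) : R :=
  match k with O => 0 | S k' => ec M A k' * (1 + / M) + A end.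

Lemma ec_ge0 M A k : 0 < M -> 0 <= A -> 0 <= ec M A k.
Proof.
move=> HM HA; elim: k => [|k IH] /=; first lra.
have : 0 < / M by apply: Rinv_0_lt_compat.
nra.
Qed.

Lemma ec_closed M A k : 0 < M -> ec M A k = A * M * ((1 + / M) ^ k - 1).
Proof.
move=> HM; elim: k => [|k IH] /=; first ring.
rewrite IH; field; lra.
Qed.

Lemma exp_pow_nat (a : R) k : exp a ^ k = exp (INR k * a).
Proof.
elim: k => [|k IH]; first by rewrite /= Rmult_0_l exp_0.
rewrite -tech_pow_Rmult IH -exp_plus S_INR; f_equal; ring.
Qed.

Lemma pow_bound (m k : nat) : (1 <= m)%N -> (k <= m)%N -> (1 + / INR m) ^ k <= 3.
Proof.
move=> Hm Hk.
have HM : 0 < INR m by apply: lt_0_INR; apply/ltP.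
have Hi : 0 < / INR m by apply: Rinv_0_lt_compat.
apply: (Rle_trans _ ((1 + / INR m) ^ m)).
  apply: Rle_pow; [lra| by apply/leP].
apply: (Rle_trans _ (exp (/ INR m) ^ m)).
  apply: pow_incr; split; [lra|].
  apply/Rlt_le/exp_ineq1; lra.
rewrite exp_pow_nat Rinv_r; last lra.
exact: exp_le_3.
Qed.

Lemma ec_bound (m b k : nat) (L : R) : (1 <= m)%N -> (m * m <= b)%N -> (k < m)%N -> 0 < L ->
  ec (INR m) (L / (6 * INR b)) k * (1 + INR m) <= L.
Proof.
move=> Hm Hmb Hk HL.
have HM : 0 < INR m by apply: lt_0_INR; apply/ltP.
have HM1 : 1 <= INR m by apply: (le_INR 1); apply/leP.
have Hb : (1 <= b)%N by apply: leq_trans Hmb; rewrite muln_gt0 Hm.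
have HB : 0 < INR b by apply: lt_0_INR; apply/ltP.
have HMb : INR m * INR m <= INR b by rewrite -mult_INR; apply: le_INR; apply/leP.
rewrite ec_closed //.
have Hp := pow_bound Hm (ltnW Hk).
have Hp1 : 1 <= (1 + / INR m) ^ k.
  apply: pow_R1_Rle; have : 0 < / INR m by apply: Rinv_0_lt_compat. lra.
have E : L / (6 * INR b) * INR m * ((1 + / INR m) ^ k - 1) * (1 + INR m)
  = L * (INR m * (1 + INR m) * ((1 + / INR m) ^ k - 1)) / (6 * INR b) by field; lra.
rewrite E.
apply: (Rmult_le_reg_r (6 * INR b)); first lra.
rewrite /Rdiv Rmult_assoc Rinv_l; last lra.
rewrite Rmult_1_r.
have H1 : INR m * (1 + INR m) <= 2 * INR b by nra.
have H2 : INR m * (1 + INR m) * ((1 + / INR m) ^ k - 1) <= 2 * INR b * 2.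
  apply: Rmult_le_compat; try lra; nra.
nra.
Qed.

Lemma nat_facts (n b m : nat) : (1 <= n)%N -> (b ^ 3 = n ^ 2)%N -> (m ^ 3 <= n < m.+1 ^ 3)%N ->
  [/\ (1 <= m)%N, (1 <= b)%N & (m * m <= b)%N].
Proof.
move=> Hn Hb /andP [Hm1 Hm2].
have m1 : (1 <= m)%N.
  case: m Hm1 Hm2 => [|m] // _; rewrite exp1n ltnS leqn0 => /eqP H0.
  by rewrite H0 in Hn.
have b1 : (1 <= b)%N.
  case: b Hb => [|b] //; rewrite exp0n // => /esym/eqP; rewrite expn_eq0 => /andP [/eqP H _].
  by move: Hn; rewrite H.
split => //.
rewrite -(leq_exp2r _ _ (isT : (0 < 3)%N)) Hb.
have -> : ((m * m) ^ 3 = (m ^ 3) ^ 2)%N by rewrite mulnn -!expnM mulnC.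
by rewrite leq_exp2r.
Qed.

Lemma tele (a : nat -> R) k : \rsum_(t < k) (a t - a t.+1) = a 0%N - a k.
Proof.
elim: k => [|k IH]; first by rewrite big_ord0; ring.
rewrite big_ord_recr /= IH; ring.
Qed.

Section Main.
Variables (n d : nat) (L : R) (fs : nat -> vec d -> R) (gs : nat -> vec d -> vec d).
Hypothesis Hn : (1 <= n)%N.
Hypothesis HL : 0 < L.
Hypothesis Hgrad : forall i, (i < n)%N -> has_gradient (fs i) (gs i).
Hypothesis Hsmooth : forall i, (i < n)%N -> smooth L (gs i).
Variable h : vec d -> ext.
Hypothesis Hproper : proper_fn h.
Hypothesis Hlsc : lsc h.
Hypothesis Hconv : convex_ext h.
Variables (b m S : nat).
Hypothesis Hm1 : (1 <= m)%N.
Hypothesis Hb1 : (1 <= b)%N.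
Hypothesis Hmb : (m * m <= b)%N.
Variable x0 : vec d.
Variable cx0 : R.
Hypothesis Hx0 : h x0 = Some cx0.

Notation eta := (/ (3 * L)).
Notation Om := (Omega n S m b).
Notation BT := {ffun 'I_b -> 'I_n}.
Definition it (w : Om) s t := iterate n gs h eta b m (draws w) x0 s t.
Definition sn (w : Om) s := snapshot n gs h eta b m (draws w) x0 s.
Definition cc t := ec (INR m) (L / (6 * INR b)) (m - t).
Definition Pot s t (w : Om) := Fr n fs h (it w s t) + cc t * norm2 (vsub (it w s t) (sn w s)).
Definition Gm s t (w : Om) := norm2 (grad_map n gs h eta (it w s t)).

Lemma eta_pos' : 0 < eta. Proof. apply: Rinv_0_lt_compat; lra. Qed.

Lemma fin_inner It snap t : (exists c, h snap = Some c) ->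
  exists c, h (inner_iter n gs h eta b It snap t) = Some c.
Proof.
case: t => [|t] //= _; exact: (prox_fin Hproper Hlsc Hconv eta_pos').
Qed.

Lemma fin_sn w s : exists c, h (sn w s) = Some c.
Proof.
elim: s => [|s IH]; first by exists cx0.
exact: fin_inner.
Qed.

Lemma fin_it w s t : exists c, h (it w s t) = Some c.
Proof. exact: fin_inner (fin_sn w s). Qed.

Lemma grad_map_norm x :
  norm2 (grad_map n gs h eta x)
  = 9 * L * L * norm2 (vsub (prox h eta (vsub x (vscale eta (gavg n gs x)))) x).
Proof.
rewrite /grad_map norm2_scale norm2_sym Rinv_inv; ring.
Qed.

Lemma step (s0 : 'I_S) (t0 : 'I_m) :
  \rsum_(w : Om) Pot s0 t0.+1 w <= \rsum_(w : Om) (Pot s0 t0 w - Gm s0 t0 w / (18 * L)).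
Proof.
have Hc := @coord_sum Om BT (fun w : Om => w s0 t0) (fun (w : Om) I => oupd w s0 t0 I)
  (fun w I => oupd_get w s0 t0 I) (fun w I J => oupd_upd w s0 t0 I J) (fun w => oupd_self w s0 t0)
  (Pot s0 t0.+1).
have Hcard : 0 < INR #|BT|.
  apply: lt_0_INR; apply/ltP; apply/card_gt0P; by exists [ffun _ => Ordinal Hn].
have HM : 0 < INR m by apply: lt_0_INR; apply/ltP.
have key : forall w : Om, \rsum_(I : BT) Pot s0 t0.+1 (oupd w s0 t0 I)
   <= INR #|BT| * (Pot s0 t0 w - Gm s0 t0 w / (18 * L)).
  move=> w.
  have Hinv1 : forall I, it (oupd w s0 t0 I) s0 t0 = it w s0 t0.
    move=> I; rewrite /it /iterate.
    rewrite (@snapshot_ext d n gs h eta b m (draws (oupd w s0 t0 I)) (draws w) x0 s0); last first.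
      move=> s' Hs' t j; apply: draws_upd_other => [[Hs _]].
      by move: Hs'; rewrite Hs ltnn.
    apply: inner_iter_ext => t' Ht' j; apply: draws_upd_other => [[_ Ht]].
    by move: Ht'; rewrite Ht ltnn.
  have Hinv2 : forall I, sn (oupd w s0 t0 I) s0 = sn w s0.
    move=> I; rewrite /sn.
    apply: snapshot_ext => s' Hs' t j; apply: draws_upd_other => [[Hs _]].
    by move: Hs'; rewrite Hs ltnn.
  set x := it w s0 t0. set xt := sn w s0.
  have [cx Hx] := fin_it w s0 t0. rewrite -/x in Hx.
  set xp := fun I => prox h eta (vsub x (vscale eta (vr_grad gs b (draws (oupd w s0 t0 I) s0 t0) x xt (gavg n gs xt)))).
  set xb := prox h eta (vsub x (vscale eta (gavg n gs x))).
  have Hnext : forall I, it (oupd w s0 t0 I) s0 t0.+1 = xp I.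
    move=> I.
    have -> : it (oupd w s0 t0 I) s0 t0.+1 = prox h eta (vsub (it (oupd w s0 t0 I) s0 t0)
       (vscale eta (vr_grad gs b (draws (oupd w s0 t0 I) s0 t0) (it (oupd w s0 t0 I) s0 t0)
          (sn (oupd w s0 t0 I) s0) (gavg n gs (sn (oupd w s0 t0 I) s0))))) by [].
    by rewrite Hinv1 Hinv2.
  set c' := cc t0.+1.
  have Hc'0 : 0 <= c'.
    apply: ec_ge0 => //; apply/Rlt_le/Rdiv_lt_0_compat => //.
    have : 0 < INR b by apply: lt_0_INR; apply/ltP. lra.
  have Hc'M : c' * (1 + INR m) <= L.
    apply: ec_bound => //; rewrite subnSK //; exact: leq_subr.
  have E := @exp_step d n fs gs L Hn HL Hgrad Hsmooth h Hproper Hlsc Hconv b x cx xt c' (INR m)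
    (fun I => draws (oupd w s0 t0 I) s0 t0) Hb1 (fun I j => draws_upd_same w s0 t0 I j)
    Hx HM Hc'0 Hc'M xp xb (fun I => erefl) erefl.
  have Hsum : \rsum_(I : BT) Pot s0 t0.+1 (oupd w s0 t0 I)
     = \rsum_(I : BT) (Fr n fs h (xp I) + c' * norm2 (vsub (xp I) xt)).
    apply: eq_bigr => I _; by rewrite /Pot Hnext Hinv2.
  rewrite Hsum.
  have Hcc : cc t0 = c' * (1 + / INR m) + L / (6 * INR b).
    rewrite /cc /c' -subnSK //.
  have HG : Gm s0 t0 w / (18 * L) = L / 2 * norm2 (vsub xb x).
    rewrite /Gm grad_map_norm -/x -/xb; field; lra.
  rewrite HG /Pot -/x -/xt Hcc.
  set SS := \rsum_(I : BT) _ in E *.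
  have E' : / INR #|BT| * SS <= Fr n fs h x + (c' * (1 + / INR m) + L / (6 * INR b)) * norm2 (vsub x xt)
     - L / 2 * norm2 (vsub xb x) := E.
  apply: (Rmult_le_reg_l (/ INR #|BT|)); first exact: Rinv_0_lt_compat.
  rewrite -Rmult_assoc Rinv_l; last lra.
  lra.
have : (\rsum_(w : Om) Pot s0 t0.+1 w) * INR #|BT|
   <= (\rsum_(w : Om) (Pot s0 t0 w - Gm s0 t0 w / (18 * L))) * INR #|BT|.
  rewrite !rsum_mulr Hc; apply: rsum_le => w.
  rewrite Rmult_comm; exact: key.
move=> H; apply: (Rmult_le_reg_r (INR #|BT|)) => //.
Qed.


Lemma Pot0 s (w : Om) : Pot s 0 w = Fr n fs h (sn w s).
Proof. by rewrite /Pot /it /iterate /= norm2_self Rmult_0_r Rplus_0_r. Qed.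

Lemma Potm s (w : Om) : Pot s m w = Fr n fs h (sn w s.+1).
Proof. by rewrite /Pot /cc subnn /= Rmult_0_l Rplus_0_r. Qed.

Lemma total_bound :
  \rsum_(s < S) \rsum_(t < m) (\rsum_(w : Om) Gm s t w / (18 * L))
  <= \rsum_(w : Om) Fr n fs h (sn w 0) - \rsum_(w : Om) Fr n fs h (sn w S).
Proof.
set Q := fun s => \rsum_(w : Om) Fr n fs h (sn w s).
have -> : \rsum_(w : Om) Fr n fs h (sn w 0) - \rsum_(w : Om) Fr n fs h (sn w S) = Q 0%N - Q S by [].
rewrite -tele; apply: rsum_le => s.
set A := fun t => \rsum_(w : Om) Pot s t w.
have -> : Q s - Q s.+1 = A 0%N - A m.
  rewrite /Q /A; congr (_ - _); apply: eq_bigr => w _; by rewrite ?Pot0 ?Potm.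
rewrite -tele; apply: rsum_le => t.
have := step s t.
rewrite /A rsumB -rsum_mulr.
lra.
Qed.

End Main.

Unset Implicit Arguments. Set Strict Implicit.

Theorem theorem2
  (n d : nat) (Hn : (1 <= n)%N) (Hd : (1 <= d)%N)
  (L : R) (HL : 0 < L)
  (fs : nat -> vec d -> R) (gs : nat -> vec d -> vec d)
  (Hgrad : forall i, (i < n)%N -> has_gradient (fs i) (gs i))
  (Hsmooth : forall i, (i < n)%N -> smooth L (gs i))
  (h : vec d -> ext)
  (Hproper : proper_fn h) (Hlsc : lsc h) (Hconv : convex_ext h) (Hclosed : closed_dom h)
  (xstar : vec d)
  (Hmin : forall z, ext_le (Fobj n fs h xstar) (Fobj n fs h z))
  (b m T S : nat)
  (Hb : (b ^ 3 = n ^ 2)%N)                       (* b = n^{2/3}, an integer *)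
  (Hm : (m ^ 3 <= n < m.+1 ^ 3)%N)               (* m = floor (n^{1/3}) *)
  (HT : (0 < T)%N) (HTS : T = (S * m)%N)          (* T a (positive) multiple of m, S = T/m *)
  (x0 : vec d) (Fx0 Fstar : R)
  (HFx0 : Fobj n fs h x0 = Some Fx0) (HFstar : Fobj n fs h xstar = Some Fstar) :
  expected_sq_grad_map n gs h (/ (3 * L)) x0 S m b
    <= 18 * L * (Fx0 - Fstar) / INR T.
Proof.
have [m1 b1 mmb] := nat_facts Hn Hb Hm.
have [cx0 Hx0] : exists c, h x0 = Some c.
  move: HFx0; rewrite /Fobj; case: (h x0) => [c|] //= _; by exists c.
have Tot := total_bound Hn HL Hgrad Hsmooth Hproper Hlsc Hconv S m1 b1 mmb Hx0.
set Om := Omega n S m b.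
set G := fun s t (w : Om) => Gm L gs h x0 s t w.
have HOm : 0 < INR #|Om|.
  apply: lt_0_INR; apply/ltP; apply/card_gt0P.
  by exists [ffun _ => [ffun _ => [ffun _ => Ordinal Hn]]].
have HT' : 0 < INR T by apply: lt_0_INR; apply/ltP.
set X := \rsum_(s < S) \rsum_(t < m) \rsum_(w : Om) G s t w.
have E1 : expected_sq_grad_map n gs h (/ (3 * L)) x0 S m b = / INR #|Om| * (/ INR T * X).
  rewrite /expected_sq_grad_map HTS rsumZ /X; congr (_ * (_ * _)).
  rewrite rsum_exch; apply: eq_bigr => s _; by rewrite rsum_exch.
have HQ0 : \rsum_(w : Om) Fr n fs h (sn L gs h x0 w 0) = INR #|Om| * Fx0.
  rewrite -rsum_const; apply: eq_bigr => w _; by rewrite /sn /= /Fr HFx0.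
have HQS : INR #|Om| * Fstar <= \rsum_(w : Om) Fr n fs h (sn L gs h x0 w S).
  rewrite -rsum_const; apply: rsum_le => w.
  have [c Hc] := @fin_sn n d L gs HL h Hproper Hlsc Hconv b m S x0 cx0 Hx0 w S.
  have := Hmin (sn L gs h x0 w S).
  rewrite HFstar /Fr /Fobj Hc /= => H; exact: H.
have HX : X / (18 * L) <= INR #|Om| * (Fx0 - Fstar).
  have -> : X / (18 * L) = \rsum_(s < S) \rsum_(t < m) (\rsum_(w : Om) G s t w / (18 * L)).
    rewrite /X /Rdiv !rsum_mulr; apply: eq_bigr => s _; rewrite rsum_mulr; apply: eq_bigr => t _.
    by rewrite rsum_mulr.
  apply: (Rle_trans _ _ _ Tot). rewrite HQ0 -/Om. lra.
rewrite E1.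
have HX' : X <= 18 * L * (INR #|Om| * (Fx0 - Fstar)).
  have := Rmult_le_compat_l (18 * L) _ _ ltac:(lra) HX.
  have -> : 18 * L * (X / (18 * L)) = X by field; lra.
  done.
have -> : 18 * L * (Fx0 - Fstar) / INR T = / INR #|Om| * (/ INR T * (18 * L * (INR #|Om| * (Fx0 - Fstar)))).
  field; lra.
apply: Rmult_le_compat_l; first by apply/Rlt_le/Rinv_0_lt_compat.
apply: Rmult_le_compat_l; first by apply/Rlt_le/Rinv_0_lt_compat.
exact: HX'.
Qed.
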